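(* Let $\mathtt{W}_1,\mathtt{W}_2,\mathtt{W}\in\mathcal{U}^{\ast,\circ}$. (i) If $\mathtt{W}_1=\mathbf{1}$, then $m_{\mathtt{W}_1,\mathtt{W}_2;\mathtt{W}}=\delta_{\mathtt{W}=\mathtt{W}_2}$. (ii) If $\mathtt{W}_2=\mathbf{1}$, then $m_{\mathtt{W}_1,\mathtt{W}_2;\mathtt{W}}=\delta_{\mathtt{W}=\mathtt{W}_1}$. (iii) If $\mathtt{W}=\mathbf{1}$, then $m_{\mathtt{W}_1,\mathtt{W}_2;\mathtt{W}}=\delta_{\mathtt{W}_1=\mathtt{W}_2=\mathbf{1}}$. (iv) If $\mathtt{W}_1,\mathtt{W}_2,\mathtt{W}\neq\mathbf{1}$, write $\mathtt{W}_1=\mathtt{W}_1'u_{j_1}u_0^{n_1}$, $\mathtt{W}_2=\mathtt{W}_2'u_{j_2}u_0^{n_2}$, $\mathtt{W}=\mathtt{W}'u_{j_3}u_0^{n_3}$ with uniquely determined $\mathtt{W}_1',\mathtt{W}_2',\mathtt{W}'\in\mathcal{U}^{\ast,\circ}$, $j_1,j_2,j_3\in\mathbb{Z}_{>0}$, $n_1,n_2,n_3\in\mathbb{Z}_{\ge0}$. Then \begin{align*} m_{\mathtt{W}_1,\mathtt{W}_2;\mathtt{W}} =& \sum_{\substack{0\le k\le j\le n_2\\ 0\le\varepsilon\le\min\{1,n_2-j\}}}\binom{n_1+k}{n_1}\binom{n_1}{j-k}\, m_{\mathtt{W}_1',\mathtt{W}_2'u_{j_2}u_0^{n_2-j-\varepsilon};\mathtt{W}'}\,\delta_{j_1=j_3}\,\delta_{n_1+k=n_3}\\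 &+\sum_{\substack{0\le k\le j\le n_1\\ 0\le\varepsilon\le\min\{1,n_1-j\}}}\binom{n_2+k}{n_2}\binom{n_2}{j-k}\, m_{\mathtt{W}_1'u_{j_1}u_0^{n_1-j-\varepsilon},\mathtt{W}_2';\mathtt{W}'}\,\delta_{j_2=j_3}\,\delta_{n_2+k=n_3}\\ &+\sum_{k=0}^{n_2}\binom{n_1+k}{n_1}\binom{n_1}{n_2-k}\, m_{\mathtt{W}_1',\mathtt{W}_2';\mathtt{W}'}\,\delta_{j_1+j_2=j_3}\,\delta_{n_1+k=n_3}. \end{align*}
   Context: Let $\mathcal{U}=\{u_j\mid j\in\mathbb{Z}_{\geq0}\}$ be an alphabet; $\mathcal{U}^\ast$ is the set of words (finite concatenations of letters, including the empty word $\mathbf{1}$), and $\mathbb{Q}\langle\mathcal{U}\rangle$ is the $\mathbb{Q}$-vector space with basis $\mathcal{U}^\ast$; $u_0^n$ denotes $n$ copies of $u_0$. The stuffle product $\ast$ on $\mathbb{Q}\langle\mathcal{U}\rangle$ is the $\mathbb{Q}$-bilinear product with $\mathbf{1}\ast\mathtt{W}=\mathtt{W}\ast\mathbf{1}=\mathtt{W}$ and $u_{j_1}\mathtt{W}_1\ast u_{j_2}\mathtt{W}_2 = u_{j_1}(\mathtt{W}_1\ast u_{j_2}\mathtt{W}_2)+u_{j_2}(u_{j_1}\mathtt{W}_1\ast\mathtt{W}_2)+u_{j_1+j_2}(\mathtt{W}_1\ast\mathtt{W}_2)$ for $j_1,j_2\in\mathbb{Z}_{\ge0}$ and words $\mathtt{W}_1,\mathtt{W}_2$.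 $\mathcal{U}^{\ast,\circ}$ is the set of words not starting with $u_0$ (including $\mathbf{1}$); its span is closed under $\ast$. For $\mathtt{W}_1,\mathtt{W}_2\in\mathcal{U}^{\ast,\circ}$, $m_{\mathtt{W}_1,\mathtt{W}_2;\mathtt{W}}\in\mathbb{Z}_{\ge0}$ is defined by $\mathtt{W}_1\ast\mathtt{W}_2=\sum_{\mathtt{W}\in\mathcal{U}^{\ast,\circ}}m_{\mathtt{W}_1,\mathtt{W}_2;\mathtt{W}}\mathtt{W}$. $\delta_{\bullet}$ is $1$ if the condition $\bullet$ holds and $0$ otherwise. Binomial coefficients $\binom{a}{b}$ with $b<0$ or $b>a$ are $0$. *)

(* Defs.v *)
From mathcomp Require Import all_boot.
Set Implicit Arguments. Unset Strict Implicit. Unset Printing Implicit Defensive.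

(* A word u_{a_1} u_{a_2} ... u_{a_r} in the alphabet U = {u_j | j >= 0} is
   encoded as the sequence [:: a_1; ...; a_r] of indices; the empty word 1 is [::]. *)
Definition word := seq nat.

(* The stuffle product of two words, as a finite formal sum of words with
   multiplicity (a sum of basis words with coefficient 1 per occurrence). *)
Fixpoint stuffle (a b : word) {struct a} : seq word :=
  match a with
  | [::] => [:: b]
  | x :: a' =>
      let fix aux (b : word) : seq word :=
        match b with
        | [::] => [:: a]
        | y :: b' =>
            map (cons x) (stuffle a' b) ++ map (cons y) (aux b')
              ++ map (cons (x + y)) (stuffle a' b')
        end in
      aux b
  end.

Definition circ (w : word) : bool :=
  if w is x :: _ then x != 0 else true.

Definition mcoef (w1 w2 w : word) : nat := count_mem w (stuffle w1 w2).

Definition wsplit (w' : word) (j n : nat) : word := w' ++ j :: nseq n 0.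

(* Main.v *)
Require Import Defs.
From mathcomp Require Import all_boot.
From mathcomp Require Import all_algebra.
From mathcomp Require Import ring zify.

Lemma stuffle_cons x a y b : stuffle (x::a) (y::b) =
  map (cons x) (stuffle a (y::b)) ++ map (cons y) (stuffle (x::a) b)
  ++ map (cons (x+y)) (stuffle a b).
Proof. by []. Qed.

Lemma count_map_cons x (s : seq word) W :
  count_mem W (map (cons x) s) = if W is w::W' then (x == w) * count_mem W' s else 0.
Proof.
elim: s => [|v s IH] /=; first by case: W => [|? ?] /=; rewrite ?muln0.
rewrite IH; case: W {IH} => [|w W'] /=; first by [].
by rewrite eqseq_cons; case: (x == w) => /=; rewrite ?mul1n ?mul0n.
Qed.

Lemma mc_nil_l b W : mcoef [::] b W = (b == W).
Proof. by rewrite /mcoef /= addn0. Qed.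

Lemma mc_nil_r a W : mcoef a [::] W = (a == W).
Proof. by case: a => [|x a]; rewrite /mcoef /= addn0. Qed.

Lemma mc_cons x a y b w W : mcoef (x::a) (y::b) (w::W) =
  (x==w)*mcoef a (y::b) W + (y==w)*mcoef (x::a) b W + (x+y==w)*mcoef a b W.
Proof. by rewrite /mcoef stuffle_cons !count_cat !count_map_cons addnA. Qed.

Lemma mc_cons_nil x a y b : mcoef (x::a) (y::b) [::] = 0.
Proof. by rewrite /mcoef stuffle_cons !count_cat !count_map_cons. Qed.

Lemma mc_nil_out U V : mcoef U V [::] = (U == [::]) && (V == [::]).
Proof.
case: U => [|x U]; first by rewrite mc_nil_l.
case: V => [|y V]; first by rewrite mc_nil_r.
by rewrite mc_cons_nil.
Qed.

Lemma RR W A B a b w :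
  mcoef (rcons A a) (rcons B b) (rcons W w) =
  (a==w)*mcoef A (rcons B b) W + (b==w)*mcoef (rcons A a) B W + (a+b==w)*mcoef A B W.
Proof.
elim: W A B => [|v W IH] A B.
  case: A => [|x A]; case: B => [|y B] /=.
  - by rewrite mc_cons !mc_nil_out.
  - rewrite mc_cons !mc_nil_out /=; case: B => [|z B] //=; by rewrite !muln0.
  - rewrite mc_cons !mc_nil_out /=; case: A => [|z A] //=; by rewrite !muln0.
  - rewrite mc_cons !mc_nil_out /=; by case: A => [|z A]; case: B => [|t B]; rewrite //= !muln0.
case: A => [|x A]; case: B => [|y B] /=.
- rewrite mc_cons !mc_nil_l !mc_nil_r.
  case: W {IH} => [|u W] /=.
    rewrite !eqseq_cons !andbT !muln0 !addn0; ring.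
  rewrite !eqseq_cons; case: W => [|t W]; by rewrite /= ?andbF ?muln0.
- rewrite !mc_cons (IH [::] B) !mc_nil_l !eqseq_cons -rcons_cons !eqseq_rcons -!mulnb; ring.
- rewrite !mc_cons (IH A [::]) !mc_nil_r !eqseq_cons -rcons_cons !eqseq_rcons -!mulnb; ring.
- rewrite [LHS]mc_cons -!rcons_cons !IH !rcons_cons !mc_cons; ring.
Qed.

Definition T p q n := \sum_(k < q.+1) 'C(p + k, p) * 'C(p, q - k) * (p + k == n).

Lemma T_closed p q n : T p q n = 'C(n, p) * 'C(p, p + q - n) * (n <= p + q).
Proof.
rewrite /T.
case: (leqP p n) => Hpn; last first.
  rewrite bin_small // !mul0n big1 // => k _.
  by rewrite (_ : (p + k == n) = false) ?muln0 //; apply/negbTE; lia.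
case: (leqP n (p + q)) => Hn; last first.
  rewrite muln0 big1 // => k _.
  by rewrite (_ : (p + k == n) = false) ?muln0 //; apply/negbTE; move: (ltn_ord k); lia.
have Hk : n - p < q.+1 by lia.
rewrite (bigD1 (Ordinal Hk)) //= big1 ?addn0.
  rewrite (_ : p + (n - p) = n) ?eqxx ?muln1; last lia.
  by rewrite (_ : q - (n - p) = p + q - n) //; lia.
move=> k Hk'; rewrite (_ : (p + k == n) = false) ?muln0 //; apply/negbTE.
apply/eqP => E; move/eqP: Hk'; apply; apply: val_inj => /=; lia.
Qed.

Lemma T1 p q n : T p.+1 q.+1 n.+1 = T p q.+1 n + T p.+1 q n + T p q n.
Proof.
rewrite !T_closed.
case: (leqP n (p + q)) => H.
  have E1 : p.+1 + q.+1 - n.+1 = (p + q - n).+1 by lia.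
  have E2 : p + q.+1 - n = (p + q - n).+1 by lia.
  have E3 : p.+1 + q - n = (p + q - n).+1 by lia.
  rewrite E1 E2 E3 !binS.
  have h1 : (n < p.+1 + q.+1) = true by lia. rewrite ?h1.
  have h2 : (n <= p + q.+1) = true by lia. rewrite ?h2.
  have h3 : (n <= p.+1 + q) = true by lia. rewrite ?h3.
  ring.
case: (ltngtP n (p + q).+1) => H2; first lia.
  have h4 : (n < p.+1 + q.+1) = false by lia. rewrite ?h4.
  have h5 : (n <= p + q.+1) = false by lia. rewrite ?h5.
  have h6 : (n <= p.+1 + q) = false by lia. rewrite ?h6.
  by rewrite !muln0.
subst n.
rewrite (_ : p.+1 + q.+1 - (p + q).+2 = 0); last lia.
rewrite (_ : p + q.+1 - (p + q).+1 = 0); last lia.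
rewrite (_ : p.+1 + q - (p + q).+1 = 0); last lia.
have h7 : ((p + q).+1 < p.+1 + q.+1) = true by lia. rewrite ?h7.
have h8 : ((p + q).+1 <= p + q.+1) = true by lia. rewrite ?h8.
have h9 : ((p + q).+1 <= p.+1 + q) = true by lia. rewrite ?h9.
by rewrite !bin0 binS !muln1 muln0 addn0 addnC.
Qed.
Lemma T3 q n : T 0 q.+1 n.+1 = T 0 q n.
Proof. rewrite !T_closed !bin0 !add0n subSS ltnS. done. Qed.

Lemma T4 q : T 0 q.+1 0 = 0.
Proof. by rewrite T_closed. Qed.

Lemma T5 p n : T p.+1 0 n.+1 = T p 0 n.
Proof.
rewrite !T_closed !addn0 subSS ltnS.
case: (ltngtP n p) => H.
- by rewrite (bin_small H) bin_small ?ltnS.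
- by rewrite muln0 muln0.
- by subst n; rewrite subnn !binn !bin0.
Qed.

Lemma T6 p q : T p.+1 q 0 = 0.
Proof. by rewrite T_closed bin_small. Qed.

Lemma T7 n : T 0 0 n.+1 = 0.
Proof. by rewrite T_closed muln0. Qed.

Lemma T8 : T 0 0 0 = 1.
Proof. by rewrite T_closed. Qed.

Definition G (g : nat -> nat) r := \sum_(e < (minn 1 r).+1) g (r - e).
Definition S (b : bool) p q n (g : nat -> nat) := b * \sum_(j < q.+1) T p j n * G g (q - j).

Lemma S_eq (b : bool) p q n g :
  \sum_(j < q.+1) \sum_(k < j.+1) \sum_(e < (minn 1 (q - j)).+1)
     'C(p + k, p) * 'C(p, j - k) * g (q - j - e) * b * (p + k == n) = S b p q n g.
Proof.
rewrite /S big_distrr; apply: eq_bigr => j _.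
rewrite /T /G big_distrl big_distrr; apply: eq_bigr => k _.
rewrite !big_distrr; apply: eq_bigr => e _ /=; ring.
Qed.

Lemma T_eq p q n x (b : bool) :
  \sum_(k < q.+1) 'C(p + k, p) * 'C(p, q - k) * x * b * (p + k == n) = T p q n * x * b.
Proof.
rewrite /T !big_distrl; apply: eq_bigr => k _ /=; ring.
Qed.

Lemma sumS (F : nat -> nat) q : \sum_(j < q.+2) F j = F 0 + \sum_(j < q.+1) F j.+1.
Proof. by rewrite big_ord_recl. Qed.

Lemma S1 b p q n g : S b p.+1 q.+1 n.+1 g = S b p q.+1 n g + S b p.+1 q n g + S b p q n g.
Proof.
rewrite /S -!mulnDr; congr (_ * _).
rewrite !(big_ord_recl q.+1) T5 !subn0.
have L : \sum_(j < q.+1) T p.+1 j.+1 n.+1 * G g (q.+1 - j.+1) =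
  \sum_(j < q.+1) T p j.+1 n * G g (q - j) + \sum_(j < q.+1) T p.+1 j n * G g (q - j)
  + \sum_(j < q.+1) T p j n * G g (q - j).
  by rewrite -!big_split; apply: eq_bigr => j _; rewrite T1 subSS !mulnDl.
have R : \sum_(j < q.+1) T p j.+1 n * G g (q.+1 - j.+1) =
  \sum_(j < q.+1) T p j.+1 n * G g (q - j).
  by apply: eq_bigr => j _; rewrite subSS.
rewrite L R; ring.
Qed.

Lemma S3 b q n g : S b 0 q.+1 n.+1 g = S b 0 q n g.
Proof.
rewrite /S big_ord_recl T7 mul0n add0n; congr (_ * _).
by apply: eq_bigr => j _; rewrite T3 subSS.
Qed.

Lemma S4 b q g : S b 0 q.+1 0 g = b * (g q.+1 + g q).
Proof.
rewrite /S big_ord_recl T8 mul1n big1 ?addn0; last by move=> j _; rewrite T4.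
have hm : minn 1 q.+1 = 1 by lia.
rewrite (_ : q.+1 - ord0 = q.+1) // /G hm big_ord_recl big_ord1 /=.
by rewrite subn0 /bump /= subn1.
Qed.

Lemma S5 b p n g : S b p.+1 0 n.+1 g = S b p 0 n g.
Proof. by rewrite /S !big_ord1 T5. Qed.

Lemma S6 b p q g : S b p.+1 q 0 g = 0.
Proof. by rewrite /S big1 ?muln0 // => j _; rewrite T6. Qed.

Lemma S7 b n g : S b 0 0 n.+1 g = 0.
Proof. by rewrite /S big_ord1 T7 muln0. Qed.

Lemma S8 b g : S b 0 0 0 g = b * g 0.
Proof. by rewrite /S big_ord1 T8 mul1n /G big_ord1. Qed.

Lemma rcons_nseq0 n : rcons (nseq n 0) 0 = 0 :: nseq n 0.
Proof. by elim: n => //= n ->. Qed.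

Lemma wsplitS X j n : wsplit X j n.+1 = rcons (wsplit X j n) 0.
Proof. by rewrite /wsplit rcons_cat /= rcons_nseq0. Qed.

Lemma wsplit0 X j : wsplit X j 0 = rcons X j.
Proof. by rewrite /wsplit cats1. Qed.

Section Crec.
Lemma C1 A a B b W w p q n :
  mcoef (wsplit A a p.+1) (wsplit B b q.+1) (wsplit W w n.+1) =
  mcoef (wsplit A a p) (wsplit B b q.+1) (wsplit W w n) +
  mcoef (wsplit A a p.+1) (wsplit B b q) (wsplit W w n) +
  mcoef (wsplit A a p) (wsplit B b q) (wsplit W w n).
Proof. by rewrite !wsplitS RR -!wsplitS !mul1n. Qed.

Lemma C2 A a B b W w p q : 0 < w ->
  mcoef (wsplit A a p.+1) (wsplit B b q.+1) (wsplit W w 0) = 0.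
Proof.
move=> hw; rewrite !wsplitS wsplit0 RR.
have -> : (0 == w) = false by lia.
by rewrite ?eqxx ?mul0n ?mul1n ?add0n ?addn0.
Qed.

Lemma C3 A a B b W w q n : 0 < a ->
  mcoef (wsplit A a 0) (wsplit B b q.+1) (wsplit W w n.+1) =
  mcoef (wsplit A a 0) (wsplit B b q) (wsplit W w n).
Proof.
move=> ha; rewrite {1}wsplit0 !wsplitS RR wsplit0 addn0.
have -> : (a == 0) = false by lia.
by rewrite ?eqxx ?mul0n ?mul1n ?add0n ?addn0.
Qed.

Lemma C4 A a B b W w q : 0 < w ->
  mcoef (wsplit A a 0) (wsplit B b q.+1) (wsplit W w 0) =
  (a == w) * (mcoef A (wsplit B b q.+1) W + mcoef A (wsplit B b q) W).
Proof.
move=> hw; rewrite [wsplit A a 0]wsplit0 [wsplit W w 0]wsplit0 [wsplit B b q.+1]wsplitS RR -!wsplitS addn0.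
have -> : (0 == w) = false by lia.
by rewrite mul0n addn0 mulnDr.
Qed.

Lemma C5 A a B b W w p n : 0 < b ->
  mcoef (wsplit A a p.+1) (wsplit B b 0) (wsplit W w n.+1) =
  mcoef (wsplit A a p) (wsplit B b 0) (wsplit W w n).
Proof.
move=> hb; rewrite {1}(wsplit0 B b) !wsplitS RR wsplit0 add0n.
have -> : (b == 0) = false by lia.
by rewrite ?eqxx ?mul0n ?mul1n ?add0n ?addn0.
Qed.

Lemma C6 A a B b W w p : 0 < w ->
  mcoef (wsplit A a p.+1) (wsplit B b 0) (wsplit W w 0) =
  (b == w) * (mcoef (wsplit A a p.+1) B W + mcoef (wsplit A a p) B W).
Proof.
move=> hw; rewrite [wsplit B b 0]wsplit0 [wsplit W w 0]wsplit0 [wsplit A a p.+1]wsplitS RR -!wsplitS add0n.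
have -> : (0 == w) = false by lia.
by rewrite mul0n add0n mulnDr.
Qed.

Lemma C7 A a B b W w n : 0 < a -> 0 < b ->
  mcoef (wsplit A a 0) (wsplit B b 0) (wsplit W w n.+1) = 0.
Proof.
move=> ha hb; rewrite !wsplit0 wsplitS RR.
have -> : (a == 0) = false by lia.
have -> : (b == 0) = false by lia.
have -> : (a + b == 0) = false by lia.
by rewrite ?eqxx ?mul0n ?mul1n ?add0n ?addn0.
Qed.

Lemma C8 A a B b W w :
  mcoef (wsplit A a 0) (wsplit B b 0) (wsplit W w 0) =
  (a == w) * mcoef A (wsplit B b 0) W + (b == w) * mcoef (wsplit A a 0) B W
  + (a + b == w) * mcoef A B W.
Proof. by rewrite !wsplit0 RR. Qed.
End Crec.

Lemma mainlem W1' W2' W' j1 j2 j3 : 0 < j1 -> 0 < j2 -> 0 < j3 -> forall n3 n1 n2,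
  mcoef (wsplit W1' j1 n1) (wsplit W2' j2 n2) (wsplit W' j3 n3) =
  S (j1 == j3) n1 n2 n3 (fun m => mcoef W1' (wsplit W2' j2 m) W') +
  S (j2 == j3) n2 n1 n3 (fun m => mcoef (wsplit W1' j1 m) W2' W') +
  T n1 n2 n3 * mcoef W1' W2' W' * (j1 + j2 == j3).
Proof.
move=> h1 h2 h3; elim=> [|n IH] [|p] [|q].
- rewrite C8 !S8 T8 /=; ring.
- rewrite C4 // S4 S6 T4 /=; ring.
- rewrite C6 // S6 S4 T6 /=; ring.
- rewrite C2 // !S6 T6; ring.
- rewrite C7 // !S7 T7; ring.
- rewrite C3 // S3 S5 T3 IH; ring.
- rewrite C5 // S5 S3 T5 IH; ring.
- rewrite C1 !S1 T1 !IH; ring.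
Qed.

Theorem proposition2p3 :
  (* (i) *)
  (forall W2 W : word, circ W2 -> circ W ->
     mcoef [::] W2 W = (W == W2)) /\
  (* (ii) *)
  (forall W1 W : word, circ W1 -> circ W ->
     mcoef W1 [::] W = (W == W1)) /\
  (* (iii) *)
  (forall W1 W2 : word, circ W1 -> circ W2 ->
     mcoef W1 W2 [::] = ((W1 == [::]) && (W2 == [::]))) /\
  (* (iv) *)
  (forall (W1' W2' W' : word) (j1 j2 j3 n1 n2 n3 : nat),
     circ W1' -> circ W2' -> circ W' ->
     0 < j1 -> 0 < j2 -> 0 < j3 ->
     mcoef (wsplit W1' j1 n1) (wsplit W2' j2 n2) (wsplit W' j3 n3) =
       \sum_(j < n2.+1) \sum_(k < j.+1) \sum_(e < (minn 1 (n2 - j)).+1)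
          'C(n1 + k, n1) * 'C(n1, j - k)
          * mcoef W1' (wsplit W2' j2 (n2 - j - e)) W'
          * (j1 == j3) * (n1 + k == n3)
     + \sum_(j < n1.+1) \sum_(k < j.+1) \sum_(e < (minn 1 (n1 - j)).+1)
          'C(n2 + k, n2) * 'C(n2, j - k)
          * mcoef (wsplit W1' j1 (n1 - j - e)) W2' W'
          * (j2 == j3) * (n2 + k == n3)
     + \sum_(k < n2.+1)
          'C(n1 + k, n1) * 'C(n1, n2 - k)
          * mcoef W1' W2' W'
          * (j1 + j2 == j3) * (n1 + k == n3)).
Proof.
split.
  by move=> W2 W _ _; rewrite mc_nil_l eq_sym.
split.
  by move=> W1 W _ _; rewrite mc_nil_r eq_sym.
split.
  by move=> W1 W2 _ _; rewrite mc_nil_out.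
move=> W1' W2' W' j1 j2 j3 n1 n2 n3 _ _ _ h1 h2 h3.
rewrite (@mainlem W1' W2' W' j1 j2 j3 h1 h2 h3) -!S_eq -T_eq.
by [].
Qed.
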